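(* Consider a combinatorial auction with $2$ bidders and $2$ items $a,b$, where both bidders have general monotone valuations. Let $\mathcal M_3$ be the randomized mechanism that with probability $1/3$ runs an ascending second-price auction on the grand bundle $\{a,b\}$, and with probability $2/3$ allocates a uniformly random item to a uniformly random bidder and then runs an ascending second-price auction for the remaining item among both bidders. Then $\mathcal M_3$ achieves a $\frac{3}{2}$-approximation to the optimal social welfare: on every instance its expected welfare under truthful play is at least $\frac23\mathrm{OPT}$.
   Context: A valuation $v:2^{\{a,b\}}\to\mathbb{R}_{\ge0}$ is (general) monotone if $v(T)\le v(T')$ whenever $T\subseteq T'$. In the auction for the remaining item, each bidder bids her marginal value for that item given the bundle she already holds; the highest bidder wins. In the grand-bundle auction, the bidder with the highest value for $\{a,b\}$ wins both items. $\mathrm{OPT}$ is the maximum of $v_1(T_1)+v_2(T_2)$ over disjoint $T_1,T_2\subseteq\{a,b\}$. *)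

(* Defs.v *)
From HB Require Import structures.
From mathcomp Require Import all_boot all_order all_algebra.
Set Implicit Arguments. Unset Strict Implicit. Unset Printing Implicit Defensive.
Import Order.TTheory GRing.Theory Num.Theory.
Local Open Scope ring_scope.

(* Bidders: bidder 1 = true, bidder 2 = false.
   A valuation profile is v : bool -> {set bool} -> R (v i T = value of bidder i for bundle T). *)
Definition item_a : bool := true.
Definition item_b : bool := false.

Definition monotone_valuation (R : realFieldType) (v : {set bool} -> R) : Prop :=
  (forall T, 0 <= v T) /\ (forall T T' : {set bool}, T \subset T' -> v T <= v T').

(* OPT = max over disjoint (T1, T2) of v1 T1 + v2 T2 (values are >= 0, so 0 is a neutral start) *)
Definition OPT (R : realFieldType) (v : bool -> {set bool} -> R) : R :=
  \big[Num.max/0]_(p : {set bool} * {set bool} | [disjoint p.1 & p.2])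
     (v true p.1 + v false p.2).

(* Ascending second-price auction on the grand bundle {a,b}: the bidder with the
   highest value for {a,b} wins both items (ties broken in favour of bidder 1);
   social welfare of the outcome under truthful play. *)
Definition grand_bundle_welfare (R : realFieldType) (v : bool -> {set bool} -> R) : R :=
  let w := if v false [set item_a; item_b] <= v true [set item_a; item_b] then true else false in
  v w [set item_a; item_b] + v (~~ w) set0.

(* Item x is given to bidder i; then an ascending second-price auction for the
   remaining item y = ~~ x, each bidder bidding her marginal value for y given her
   current bundle; the highest bidder wins (ties broken in favour of i). *)
Definition item_then_auction_welfare (R : realFieldType) (v : bool -> {set bool} -> R)
    (i x : bool) : R :=
  let y := ~~ x in
  let bid_i := v i [set x; y] - v i [set x] in
  let bid_j := v (~~ i) [set y] - v (~~ i) set0 in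
  if bid_j <= bid_i then v i [set x; y] + v (~~ i) set0
  else v i [set x] + v (~~ i) [set y].

Definition M3_expected_welfare (R : realFieldType) (v : bool -> {set bool} -> R) : R :=
  3^-1 * grand_bundle_welfare v
  + (2 / 3) * (\sum_(i : bool) \sum_(x : bool) 4^-1 * item_then_auction_welfare v i x).

(* Main.v *)
Require Import Defs.
From HB Require Import structures.
From mathcomp Require Import all_boot all_order all_algebra.
From mathcomp Require Import lra.
Import Order.TTheory GRing.Theory Num.Theory.
Local Open Scope ring_scope.

Lemma core (R : realFieldType) (e1 a1 b1 g1 e2 a2 b2 g2 : R) :
  0 <= e1 -> e1 <= a1 -> e1 <= b1 -> a1 <= g1 -> b1 <= g1 ->
  0 <= e2 -> e2 <= a2 -> e2 <= b2 -> a2 <= g2 -> b2 <= g2 ->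
  let M := 3^-1 * (if g2 <= g1 then g1 + e2 else g2 + e1)
    + (2/3) * (4^-1 * (if b2 - e2 <= g1 - a1 then g1 + e2 else a1 + b2)
             + 4^-1 * (if a2 - e2 <= g1 - b1 then g1 + e2 else b1 + a2)
             + (4^-1 * (if b1 - e1 <= g2 - a2 then g2 + e1 else a2 + b1)
             + 4^-1 * (if a1 - e1 <= g2 - b2 then g2 + e1 else b2 + a1))) in
  (2/3) * (e1+e2) <= M /\ (2/3) * (a1+e2) <= M /\ (2/3)*(b1+e2) <= M /\
      (2/3)*(g1+e2) <= M /\ (2/3)*(e1+a2) <= M /\ (2/3)*(e1+b2) <= M /\
      (2/3)*(e1+g2) <= M /\ (2/3)*(a1+b2) <= M /\ (2/3)*(b1+a2) <= M.
Proof.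
move=> ? ? ? ? ? ? ? ? ? ? M; rewrite {}/M.
case: ifP => /= ?; case: ifP => /= ?; case: ifP => /= ?; case: ifP => /= ?;
case: ifP => /= ?; (repeat split); lra.
Qed.

Lemma sets4 (T : {set bool}) : T = set0 \/ T = [set true] \/ T = [set false] \/ T = [set true; false].
Proof.
case Ht: (true \in T); case Hf: (false \in T).
- by do 3 right; apply/setP => -[]; rewrite !inE ?Ht ?Hf.
- by right; left; apply/setP => -[]; rewrite !inE ?Ht ?Hf.
- by do 2 right; left; apply/setP => -[]; rewrite !inE ?Ht ?Hf.
- by left; apply/setP => -[]; rewrite !inE ?Ht ?Hf.
Qed.
Lemma X (R : realFieldType) (v : bool -> {set bool} -> R) (M : R) :
  (forall (p : {set bool} * {set bool}), [disjoint p.1 & p.2] -> 2/3 * (v true p.1 + v false p.2) <= M) -> 0 <= M ->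
  (2 / 3) * OPT v <= M.
Proof.
move=> H H0; rewrite /OPT.
elim/big_ind: _ => //.
- by rewrite mulr0.
- by move=> x y hx hy; rewrite maxEle; case: ifP.
Qed.
Lemma Y (p : {set bool} * {set bool}) : [disjoint p.1 & p.2] -> 
  (p.1 = set0 /\ p.2 = set0) \/ (p.1 = set0 /\ p.2 = [set true]) \/ (p.1 = set0 /\ p.2 = [set false]) \/
  (p.1 = set0 /\ p.2 = [set true; false]) \/ (p.1 = [set true] /\ p.2 = set0) \/ (p.1 = [set true] /\ p.2 = [set false]) \/
  (p.1 = [set false] /\ p.2 = set0) \/ (p.1 = [set false] /\ p.2 = [set true]) \/ (p.1 = [set true; false] /\ p.2 = set0).
Proof.
case: p => A B /= D.
have F: forall x, x \in A -> x \in B -> False by move=> x xa xb; move: (disjointFr D xa); rewrite xb.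
case: (sets4 A) => [EA|[EA|[EA|EA]]]; case: (sets4 B) => [EB|[EB|[EB|EB]]]; subst A B; (try by do ?[by left; split | right]; split);
  exfalso; first [by apply: (F true); rewrite !inE | by apply: (F false); rewrite !inE].
Qed.

Theorem claimB5 (R : realFieldType) (v : bool -> {set bool} -> R)
  (hv : forall i : bool, monotone_valuation (v i)) :
  (2 / 3) * OPT v <= M3_expected_welfare v.
Proof.
have E : [set false; true] = [set true; false] :> {set bool} by rewrite setUC.
have mon : forall i, [/\ 0 <= v i set0, v i set0 <= v i [set true], v i set0 <= v i [set false],
   v i [set true] <= v i [set true; false] & v i [set false] <= v i [set true; false]].
  move=> i; case: (hv i) => h0 hm; split => //; apply: hm;
    by rewrite ?sub0set // ?subsetUl ?subsetUr.
have [h1 h2 h3 h4 h5] := mon true.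
have [h6 h7 h8 h9 h10] := mon false.
have := @core R _ _ _ _ _ _ _ _ h1 h2 h3 h4 h5 h6 h7 h8 h9 h10.
have G : grand_bundle_welfare v = if v false [set true; false] <= v true [set true; false]
   then v true [set true; false] + v false set0 else v false [set true; false] + v true set0.
  by rewrite /grand_bundle_welfare /item_a /item_b; case: ifP.
rewrite /M3_expected_welfare G /item_then_auction_welfare /item_a /item_b.
rewrite !big_bool /= E => C.
have [c1 [c2 [c3 [c4 [c5 [c6 [c7 [c8 c9]]]]]]]] := C.
apply: X; last first.
  apply: (le_trans _ c1); lra.
move=> p /Y.
by do 8?[case=> [[-> ->]|]] => // -[-> ->].
Qed.
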